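(* Let $f:\mathbb{R}^d\to\mathbb{R}$ be Lipschitz continuous and SISTr, and let $\ell\in\mathbb{R}$. Then for each $x\in\mathbb{R}^d$ there is a unique $c_x\in\mathbb{R}$ with $f(x+c_x\mathbf{1})=\ell$, and the map $x\mapsto c_x$ is continuous.
   Context: $\mathbf{1}$ is the all-ones vector in $\mathbb{R}^d$. A function $g:\mathbb{R}^d\to\mathbb{R}$ is SISTr (strictly increasing under scalar translation) if, for every $x\in\mathbb{R}^d$, the map $c\in\mathbb{R}\mapsto g(x+c\mathbf{1})$ is strictly increasing and maps $\mathbb{R}$ onto $\mathbb{R}$. *)

(* Defs.v *)
From HB Require Import structures.
From mathcomp Require Import all_boot all_order all_algebra.
From mathcomp Require Import all_classical all_reals all_analysis.
Set Implicit Arguments. Unset Strict Implicit. Unset Printing Implicit Defensive.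
Import Order.TTheory GRing.Theory Num.Theory.
Import numFieldNormedType.Exports.
Local Open Scope ring_scope.

(* R^d is represented as row vectors 'rV[R]_d (normed with the sup norm;
   Lipschitz continuity does not depend on the choice of norm on R^d). *)

Definition ones (R : realType) (d : nat) : 'rV[R]_d := const_mx 1.

Definition SISTr (R : realType) (d : nat) (g : 'rV[R]_d -> R) : Prop :=
  forall x : 'rV[R]_d,
    (forall c1 c2 : R, c1 < c2 -> g (x + c1 *: ones R d) < g (x + c2 *: ones R d))
    /\ (forall y : R, exists c : R, g (x + c *: ones R d) = y).

(* Lipschitz continuity: we use MathComp-Analysis's notation [lipschitz f]
   (normedtype: lipschitz_on f (globally setT)), i.e. exists k, |f x - f y| <= k ||x - y||. *)

(* Main.v *)
Require Import Defs.
From HB Require Import structures.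
From mathcomp Require Import all_boot all_order all_algebra.
From mathcomp Require Import all_classical all_reals all_analysis.
From mathcomp Require Import lra.
Import Order.TTheory GRing.Theory Num.Theory.
Import numFieldNormedType.Exports.
Local Open Scope ring_scope.

Lemma sistr_le (R : realType) (d : nat) (f : 'rV[R]_d -> R) x c1 c2 :
  SISTr f -> c1 <= c2 -> f (x + c1 *: ones R d) <= f (x + c2 *: ones R d).
Proof.
move=> S; rewrite le_eqVlt => /orP[/eqP->//|lt].
by apply/ltW; apply: (S x).1.
Qed.

Theorem lemma3p2 (R : realType) (d : nat) (f : 'rV[R]_d -> R) (l : R) :
  lipschitz f -> SISTr f ->
  exists c : 'rV[R]_d -> R,
    (forall x : 'rV[R]_d,
        f (x + c x *: ones R d) = l /\
        (forall c' : R, f (x + c' *: ones R d) = l -> c' = c x))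
    /\ continuous c.
Proof.
move=> Lf S.
have [k k0 Hk] := pinfty_ex_gt0 Lf.
have Lk : forall u v, `|f u - f v| <= k * `|u - v|.
  by move=> u v; apply: (Hk (u, v)).
have ex : forall x, exists c, f (x + c *: ones R d) = l by move=> x; exact: (S x).2.
have [c cE] := choice ex.
have uniq x c' : f (x + c' *: ones R d) = l -> c' = c x.
  move=> H; case: (ltgtP c' (c x)) => // H'.
    by have := (S x).1 _ _ H'; rewrite H cE ltxx.
  by have := (S x).1 _ _ H'; rewrite H cE ltxx.
exists c; split => [x|]; first by split => //; exact: uniq.
move=> x; apply/(@cvgrPdist_lt _ _ _ (nbhs x) (nbhs_filter x)) => e e0.
set a := c x.
have h1 : f (x + (a - e) *: ones R d) < l.
  by rewrite -(cE x); apply: (S x).1; rewrite ltrBlDr ltrDl.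
have h2 : l < f (x + (a + e) *: ones R d).
  by rewrite -(cE x); apply: (S x).1; rewrite ltrDl.
set d1 := l - f (x + (a - e) *: ones R d).
set d2 := f (x + (a + e) *: ones R d) - l.
have d10 : 0 < d1 by rewrite subr_gt0.
have d20 : 0 < d2 by rewrite subr_gt0.
apply/(@nbhs_normP _ _ x); exists (Num.min d1 d2 / k).
  by apply: divr_gt0 => //; rewrite lt_min d10.
move=> t /= Ht.
have Ht' : k * `|x - t| < Num.min d1 d2 by rewrite mulrC -ltr_pdivlMr.
have Hb b : `|f (t + b *: ones R d) - f (x + b *: ones R d)| < Num.min d1 d2.
  apply: le_lt_trans (Lk _ _) _.
  by rewrite opprD addrACA subrr addr0 -normrN opprB.
have g1 : f (t + (a - e) *: ones R d) < l.
  have := Hb (a - e); rewrite lt_min => /andP[+ _].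
  rewrite ltr_norml => /andP[_]; rewrite /d1; lra.
have g2 : l < f (t + (a + e) *: ones R d).
  have := Hb (a + e); rewrite lt_min => /andP[_ +].
  rewrite ltr_norml => /andP[+ _]; rewrite /d2; lra.
have lo : a - e < c t.
  rewrite ltNge; apply/negP => H.
  have Hl := @sistr_le _ _ f t _ _ S H; rewrite cE in Hl.
  by have := lt_le_trans g1 Hl; rewrite ltxx.
have hi : c t < a + e.
  rewrite ltNge; apply/negP => H.
  have Hl := @sistr_le _ _ f t _ _ S H; rewrite cE in Hl.
  by have := lt_le_trans g2 Hl; rewrite ltxx.
rewrite ltr_norml; move: lo hi; set u := c t; clear -u; move=> lo hi.
apply/andP; split; lra.
Qed.
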